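(* Let $\Sigma$ be a dec-DNNF circuit whose root is a decision node labelled by the variable $x$, with 0-child $u$ and 1-child $w$. Let $S\subseteq\textit{IP}(\Sigma)$ and define $S_u=\{t\mid t\wedge\overline{x}\in S\}\cup(S\cap\textit{IP}(\Sigma_u))$, $S_w=\{t\mid t\wedge x\in S\}\cup(S\cap\textit{IP}(\Sigma_w))$ and $S'=\{t\mid t\in S,\ x\notin var(t)\}$. Then $S_u\subseteq\textit{IP}(\Sigma_u)$ and $S_w\subseteq\textit{IP}(\Sigma_w)$, and $S=\textit{IP}(\Sigma)$ if and only if $S_u=\textit{IP}(\Sigma_u)$, $S_w=\textit{IP}(\Sigma_w)$, and $S'=\max(\{t_u\wedge t_w\mid t_u\in S_u,\ t_w\in S_w\},\models)$.
   Context: A term is a conjunction of literals (possibly empty); $var(t)$ is the set of variables occurring in $t$. A term $t$ is an implicant of $f$ if $t\models f$, and prime if no term obtained by deleting a literal from $t$ is an implicant. $\textit{IP}(\cdot)$ denotes the set of prime implicants of the function computed by a circuit. A dec-DNNF circuit is a rooted DAG whose leaves are labelled $0$, $1$ or a literal and whose internal nodes are decision nodes (labelled by a variable $x$, with 0-child $u$ and 1-child $w$, computing $(\overline{x}\wedge f_u)\vee(x\wedge f_w)$ where $f_u,f_w$ are the functions computed at the children) or $\wedge$-nodes whose children's subcircuits mention pairwise disjoint sets of variables. $\Sigma_v$ denotes the subcircuit rooted at node $v$. For a set $T$ of terms, $\max(T,\models)$ is the set of terms of $T$ that do not entail another term of $T$. *)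

(* Defs.v *)
From HB Require Import structures.
From mathcomp Require Import all_boot finmap.
Set Implicit Arguments. Unset Strict Implicit. Unset Printing Implicit Defensive.
Local Open Scope fset_scope.

(* Variables are natural numbers; a literal is (v, true) for v and
   (v, false) for the negated literal ~v. *)
Definition lit := (nat * bool)%type.
(* A term is a finite set of literals (read as their conjunction);
   a genuine term is additionally consistent (see [consistent]). *)
Definition term := {fset lit}.

Definition consistent (t : term) : Prop :=
  forall v : nat, ~ ((v, true) \in t /\ (v, false) \in t).

Definition var_in (x : nat) (t : term) : Prop := (x, true) \in t \/ (x, false) \in t.

Definition assignment := nat -> bool.

Definition sat_lit (a : assignment) (l : lit) : bool := a l.1 == l.2.
Definition sat_term (a : assignment) (t : term) : Prop := forall l, l \in t -> sat_lit a l.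

Definition entails (t t' : term) : Prop := forall a, sat_term a t -> sat_term a t'.

(* Circuits (tree unfolding of the DAG; sharing is irrelevant to semantics). *)
Inductive circuit : Type :=
| Leaf0 : circuit
| Leaf1 : circuit
| LeafLit : lit -> circuit
| Dec : nat -> circuit -> circuit -> circuit
| AndN : seq circuit -> circuit.

Fixpoint eval (a : assignment) (c : circuit) {struct c} : bool :=
  match c with
  | Leaf0 => false
  | Leaf1 => true
  | LeafLit l => sat_lit a l
  | Dec x u w => if a x then eval a w else eval a u
  | AndN cs => (fix evs (cs : seq circuit) : bool :=
                  match cs with [::] => true | c :: cs' => eval a c && evs cs' end) cs
  end.

Fixpoint vars (c : circuit) {struct c} : seq nat :=
  match c with
  | Leaf0 | Leaf1 => [::]
  | LeafLit l => [:: l.1]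
  | Dec x u w => x :: vars u ++ vars w
  | AndN cs => (fix vs (cs : seq circuit) : seq nat :=
                  match cs with [::] => [::] | c :: cs' => vars c ++ vs cs' end) cs
  end.

(* dec-DNNF: decision nodes (x not mentioned below them, as decision nodes are
   decomposable ands (x /\ f_w) \/ (~x /\ f_u)), and decomposable and-nodes. *)
Inductive decDNNF : circuit -> Prop :=
| dd0 : decDNNF Leaf0
| dd1 : decDNNF Leaf1
| ddLit l : decDNNF (LeafLit l)
| ddDec x u w : x \notin vars u -> x \notin vars w ->
    decDNNF u -> decDNNF w -> decDNNF (Dec x u w)
| ddAnd (cs : seq circuit) :
    (forall i, (i < size cs)%N -> decDNNF (nth Leaf0 cs i)) ->
    (forall i j, (i < size cs)%N -> (j < size cs)%N -> i <> j ->
       forall v, v \in vars (nth Leaf0 cs i) -> v \notin vars (nth Leaf0 cs j)) ->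
    decDNNF (AndN cs).

Definition implicant (t : term) (c : circuit) : Prop :=
  forall a, sat_term a t -> eval a c.

Definition IP (c : circuit) (t : term) : Prop :=
  consistent t /\ implicant t c /\
  forall l, l \in t -> ~ implicant (t `\ l) c.

Definition subset_of (A B : term -> Prop) : Prop := forall t, A t -> B t.
Definition same_set (A B : term -> Prop) : Prop := forall t, A t <-> B t.

Definition maxent (T : term -> Prop) (t : term) : Prop :=
  T t /\ forall t', T t' -> t' <> t -> ~ entails t t'.

(* S_u (b = false, child c = u) and S_w (b = true, child c = w) *)
Definition S_child (x : nat) (b : bool) (c : circuit) (S : term -> Prop) (t : term) : Prop :=
  (~ var_in x t /\ S (t `|` [fset (x, b)])) \/ (S t /\ IP c t).

Definition S_nox (x : nat) (S : term -> Prop) (t : term) : Prop := S t /\ ~ var_in x t.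

(* { t_u /\ t_w | t_u in A, t_w in B }, keeping only genuine (consistent) terms *)
Definition conj_set (A B : term -> Prop) (t : term) : Prop :=
  exists tu tw, A tu /\ B tw /\ t = tu `|` tw /\ consistent t.

(* Main.v *)
Require Import Defs.
From mathcomp Require Import all_boot finmap.
From Stdlib Require Import Classical.
Set Implicit Arguments. Unset Strict Implicit. Unset Printing Implicit Defensive.
Local Open Scope fset_scope.

Definition impf (f : assignment -> bool) (t : term) := forall a, sat_term a t -> f a.
Definition IPf (f : assignment -> bool) (t : term) :=
  consistent t /\ impf f t /\ forall l, l \in t -> ~ impf f (t `\ l).
Definition upd (a : assignment) (x : nat) (b : bool) : assignment :=
  fun v => if v == x then b else a v.
Definition indep x (f : assignment -> bool) := forall a b, f (upd a x b) = f a.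

Lemma sat_U1 a t l : sat_term a (t `|` [fset l]) <-> sat_term a t /\ sat_lit a l.
Proof.
split.
- move=> H; split; [move=> z zt|]; apply: H; by rewrite !inE ?zt ?eqxx ?orbT.
- move=> [H1 H2] z; rewrite !inE => /orP[/H1 //|/eqP->//].
Qed.

Lemma impf_mono f t t' : t `<=` t' -> impf f t -> impf f t'.
Proof. move=> /fsubsetP s H a Ha; apply: H => z zt; exact: Ha (s z zt). Qed.

Lemma cons_sub t t' : t' `<=` t -> consistent t -> consistent t'.
Proof. move=> /fsubsetP s H v [h1 h2]; apply: (H v); split; exact: s. Qed.

Lemma IPf_min f t : IPf f t <->
  consistent t /\ impf f t /\ forall t', t' `<=` t -> impf f t' -> t' = t.
Proof.
split.
- move=> [c [i m]]; split=> //; split=> // t' s it'.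
  apply/eqP; rewrite eqEfsubset s /=; apply/fsubsetP => z zt.
  apply/negPn/negP => zt'; apply: (m z zt); apply: impf_mono it'.
  apply/fsubsetP => y yt'; rewrite !inE (fsubsetP s y yt') andbT.
  by apply/negP => /eqP E; move: zt'; rewrite -E yt'.
- move=> [c [i m]]; split=> //; split=> // l lt H.
  have := m _ (fsubsetDl t [fset l]) H => E.
  by move: lt; rewrite -E !inE eqxx.
Qed.

Lemma exists_prime f t : consistent t -> impf f t -> exists2 p, p `<=` t & IPf f p.
Proof.
move: {2}#|`t| (leqnn #|`t|) => n; elim: n t => [|n IHn] t.
- rewrite leqn0 cardfs_eq0 => /eqP -> c i; exists (fset0 : term) => //.
- move=> hn c i.
  case: (classic (exists l, l \in t /\ impf f (t `\ l))) => [[l [lt il]]|nl].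
  + have s : t `\ l `<=` t by apply: fsubsetDl.
    have hs : #|` t `\ l| <= n.
      rewrite -ltnS; apply: leq_trans hn; rewrite (cardfsD1 l t) lt /=.
      by rewrite ltnS.
    have [p ps pI] := IHn (t `\ l) hs (cons_sub s c) il.
    exists p => //; exact: fsubset_trans ps s.
  + exists t => //; split=> //; split=> // l lt il; apply: nl; by exists l.
Qed.

Lemma nox_lit x t l : ~ var_in x t -> l \in t -> l.1 != x.
Proof.
case: l => v b nv lt /=; apply/negP => /eqP E; subst v; apply: nv; by case: b lt; [left|right].
Qed.

Lemma sat_upd x t a b : ~ var_in x t -> sat_term a t -> sat_term (upd a x b) t.
Proof.
move=> nv H l lt; have := H l lt; rewrite /sat_lit /upd.
by rewrite (negbTE (nox_lit nv lt)).
Qed.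

Lemma nox_sub x t t' : t' `<=` t -> ~ var_in x t -> ~ var_in x t'.
Proof. move=> /fsubsetP s nv [h|h]; apply: nv; [left|right]; exact: s. Qed.

Lemma nox_U x t t' : ~ var_in x t -> ~ var_in x t' -> ~ var_in x (t `|` t').
Proof.
move=> n1 n2 [h|h]; move: h; rewrite inE => /orP[h|h];
  by [apply: n1; (left + right) | apply: n2; (left + right)].
Qed.

Lemma IPf_nox x f t : indep x f -> IPf f t -> ~ var_in x t.
Proof.
move=> hi [c [i m]].
have key : forall b, (x, b) \in t -> False.
  move=> b xb; apply: (m _ xb) => a Ha; rewrite -(hi a b); apply: i => l lt.
  rewrite /sat_lit /upd.
  case: (eqVneq l (x, b)) => [->|ne]; first by rewrite /= eqxx.
  case: l lt ne => v b' lt ne /=.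
  case: (eqVneq v x) => [E|nE].
  - subst v; case: (eqVneq b' b) => [E|nb]; first by rewrite E eqxx in ne.
    exfalso; apply: (c x); move: xb lt nb Ha ne; case: b; case: b' => //= ? ? _ _ _; by split.
  - have := Ha (v, b'); rewrite /sat_lit /=; apply; rewrite !inE lt andbT.
    apply/negP => /eqP [] E; by rewrite E eqxx in nE.
by move=> [h|h]; apply: key h.
Qed.

Lemma entails_sub t t' : consistent t -> entails t t' -> t' `<=` t.
Proof.
move=> c e; apply/fsubsetP => [[v' b']] lt'; apply/negPn/negP => nl.
pose a : assignment := fun v => if v == v' then ~~ b' else (v, true) \in t.
have Ha : sat_term a t.
  move=> [v b] vt; rewrite /sat_lit /a /=.
  case: (eqVneq v v') => [E|nE].
  - subst v; case: (eqVneq b b') => [E|nb]; first by rewrite E in vt; rewrite vt in nl.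
    by move: nb; clear; case: b; case: b'.
  - case: b vt => vt; first by rewrite vt.
    apply/eqP; apply/negbTE/negP => vt'; exact: (c v).
have := e a Ha _ lt'; rewrite /sat_lit /a /= eqxx.
by move=> /eqP; case: (b').
Qed.

Lemma notin_lit x t b : ~ var_in x t -> (x, b) \notin t.
Proof. by move=> nv; apply/negP => h; apply: nv; case: b h; [left|right]. Qed.

Lemma A_imp x b (F g h : assignment -> bool) t :
  (forall a, a x = b -> F a = g a) -> (forall a, a x = ~~ b -> F a = h a) ->
  indep x g -> indep x h -> ~ var_in x t ->
  (impf F t <-> impf g t /\ impf h t).
Proof.
move=> HF1 HF2 Hg Hh nv; split.
- move=> i; split=> a Ha.
  + rewrite -(Hg a b) -HF1; first by apply: i; apply: sat_upd.
    by rewrite /upd eqxx.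
  + rewrite -(Hh a (~~ b)) -HF2; first by apply: i; apply: sat_upd.
    by rewrite /upd eqxx.
- move=> [i1 i2] a Ha; case: (eqVneq (a x) b) => [E|nE].
  + by rewrite HF1 //; apply: i1.
  + rewrite HF2; first by apply: i2.
    by move: nE; clear; case: (a x); case: b.
Qed.

Lemma B_imp x b (F g : assignment -> bool) t :
  (forall a, a x = b -> F a = g a) -> indep x g -> ~ var_in x t ->
  (impf F (t `|` [fset (x, b)]) <-> impf g t).
Proof.
move=> HF1 Hg nv; split.
- move=> i a Ha; rewrite -(Hg a b) -HF1; last by rewrite /upd eqxx.
  apply: i; apply/sat_U1; split; first exact: sat_upd.
  by rewrite /sat_lit /upd /= eqxx.
- move=> i a /sat_U1 [Ha Hl]; rewrite HF1; first exact: i.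
  by apply/eqP; exact: Hl.
Qed.

Lemma U1_inj (t t' : term) l : l \notin t -> t' `<=` t ->
  t' `|` [fset l] = t `|` [fset l] -> t' = t.
Proof.
move=> nl s E; apply/eqP; rewrite eqEfsubset s /=; apply/fsubsetP => z zt.
have : z \in t `|` [fset l] by rewrite inE zt.
rewrite -E !inE => /orP[//|/eqP E']; by move: nl; rewrite -E' zt.
Qed.

Lemma C1 x b (F g : assignment -> bool) t :
  (forall a, a x = b -> F a = g a) -> indep x g -> ~ var_in x t ->
  IPf F (t `|` [fset (x, b)]) -> IPf g t.
Proof.
move=> HF1 Hg nv /IPf_min [c [i m]]; apply/IPf_min; split.
  apply: cons_sub c; exact: fsubsetUl.
split; first by apply/(B_imp HF1 Hg nv).
move=> t' s it'.
have nv' := nox_sub s nv.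
have E := m (t' `|` [fset (x, b)]) (fsetSU _ s) (proj2 (B_imp HF1 Hg nv') it').
exact: U1_inj (notin_lit b nv) s E.
Qed.

Lemma cons_U1 x b t : consistent t -> ~ var_in x t -> consistent (t `|` [fset (x, b)]).
Proof.
move=> c nv v [].
rewrite !inE => /orP[h1|/eqP[E1 F1]] /orP[h2|/eqP[E2 F2]].
- exact: (c v).
- by apply: nv; subst v; left.
- by apply: nv; subst v; right.
- by rewrite -F1 in F2.
Qed.

Lemma C2 x b (F g h : assignment -> bool) t :
  (forall a, a x = b -> F a = g a) -> (forall a, a x = ~~ b -> F a = h a) ->
  indep x g -> indep x h ->
  IPf g t -> IPf F (t `|` [fset (x, b)]) \/ IPf F t.
Proof.
move=> HF1 HF2 Hg Hh It.
have nv := IPf_nox Hg It.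
move/IPf_min: It => [c [i m]].
case: (classic (impf h t)) => ih.
- right; apply/IPf_min; split=> //; split; first by apply/(A_imp HF1 HF2 Hg Hh nv).
  move=> t' s it'; have nv' := nox_sub s nv.
  apply: m s _; exact: (proj1 (proj1 (A_imp HF1 HF2 Hg Hh nv') it')).
- left; apply/IPf_min; split; first exact: cons_U1.
  split; first by apply/(B_imp HF1 Hg nv).
  move=> t' s it'.
  case: (boolP ((x, b) \in t')) => lt'.
  + have s'' : t' `\ (x, b) `<=` t.
      apply/fsubsetP => z; rewrite !inE => /andP[ne zt'].
      move: (fsubsetP s z zt'); rewrite !inE => /orP[//|E]; by rewrite E in ne.
    have nv'' := nox_sub s'' nv.
    have E : t' = t' `\ (x, b) `|` [fset (x, b)] by rewrite fsetUC fsetD1K.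
    rewrite E in it'; have := m _ s'' (proj1 (B_imp HF1 Hg nv'') it').
    by move=> E'; rewrite E E'.
  + have s' : t' `<=` t.
      apply/fsubsetP => z zt'; move: (fsubsetP s z zt'); rewrite !inE => /orP[//|/eqP E].
      by rewrite -E zt' in lt'.
    have nv' := nox_sub s' nv.
    exfalso; apply: ih; apply: impf_mono s' _.
    exact: (proj2 (proj1 (A_imp HF1 HF2 Hg Hh nv') it')).
Qed.

Lemma C3 x b (F g h : assignment -> bool) p :
  (forall a, a x = b -> F a = g a) -> (forall a, a x = ~~ b -> F a = h a) ->
  indep x g -> indep x h ->
  IPf F p -> (x, b) \in p ->
  ~ var_in x (p `\ (x, b)) /\ p = p `\ (x, b) `|` [fset (x, b)] /\
  IPf g (p `\ (x, b)) /\ ~ IPf F (p `\ (x, b)).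
Proof.
move=> HF1 HF2 Hg Hh Ip lp.
have nv : ~ var_in x (p `\ (x, b)).
  have c := proj1 Ip.
  move=> [h1|h1]; move: h1; rewrite !inE => /andP[ne hp]; move: ne lp hp;
    case: b {HF1 HF2} => //=; first [by rewrite eqxx | move=> _ h1 h2; apply: (c x); by split].
have E : p = p `\ (x, b) `|` [fset (x, b)] by rewrite fsetUC fsetD1K.
split=> //; split=> //; split.
  apply: (C1 HF1 Hg nv); by rewrite -E.
move=> [_ [i _]]; move/IPf_min: Ip => [_ [_ m]].
have := m _ (fsubsetDl p [fset (x, b)]) i => E'.
by move: lp; rewrite -E' !inE eqxx.
Qed.

Lemma conj_cong A A' B B' : same_set A A' -> same_set B B' ->
  same_set (maxent (conj_set A B)) (maxent (conj_set A' B')).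
Proof.
move=> hA hB.
have hc : forall t, conj_set A B t <-> conj_set A' B' t.
  move=> t; split=> [[tu [tw [h1 [h2 h3]]]]|[tu [tw [h1 [h2 h3]]]]];
    exists tu, tw; (split; [by apply/hA|split; [by apply/hB|by []]]).
move=> t; split=> [[h1 h2]|[h1 h2]]; split.
- exact: (proj1 (hc t) h1).
- move=> t' ht'; apply: h2; exact: (proj2 (hc t') ht').
- exact: (proj2 (hc t) h1).
- move=> t' ht'; apply: h2; exact: (proj1 (hc t') ht').
Qed.

Lemma nox_equiv x (F f0 f1 : assignment -> bool) t :
  (forall a, a x = false -> F a = f0 a) -> (forall a, a x = true -> F a = f1 a) ->
  indep x f0 -> indep x f1 ->
  (IPf F t /\ ~ var_in x t) <-> maxent (conj_set (IPf f0) (IPf f1)) t.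
Proof.
move=> HF0 HF1 H0 H1.
have AI := fun t nv => A_imp (b := false) (t := t) HF0 HF1 H0 H1 nv.
split.
- move=> [/IPf_min [c [i m]] nv].
  have [i0 i1] := proj1 (AI t nv) i.
  have [tu su Iu] := exists_prime c i0.
  have [tw sw Iw] := exists_prime c i1.
  have s : tu `|` tw `<=` t by rewrite fsubUset su sw.
  have nv' := nox_sub s nv.
  have E : tu `|` tw = t.
    apply: (m _ s); apply/(AI _ nv'); split.
    + apply: impf_mono (fsubsetUl _ _) _; exact: (proj1 (proj2 Iu)).
    + apply: impf_mono (fsubsetUr _ _) _; exact: (proj1 (proj2 Iw)).
  split; first by exists tu, tw.
  move=> t' [tu' [tw' [Iu' [Iw' [E' c']]]]] ne en.
  have s' := entails_sub c en.
  apply: ne; apply: (m _ s').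
  apply/(AI _ (nox_sub s' nv)); rewrite E'; split.
  + apply: impf_mono (fsubsetUl _ _) _; exact: (proj1 (proj2 Iu')).
  + apply: impf_mono (fsubsetUr _ _) _; exact: (proj1 (proj2 Iw')).
- move=> [[tu [tw [Iu [Iw [E c]]]]] mx].
  have nv : ~ var_in x t by rewrite E; apply: nox_U; [exact: IPf_nox Iu|exact: IPf_nox Iw].
  split=> //; apply/IPf_min; split=> //; split.
    apply/(AI _ nv); rewrite E; split.
    + apply: impf_mono (fsubsetUl _ _) _; exact: (proj1 (proj2 Iu)).
    + apply: impf_mono (fsubsetUr _ _) _; exact: (proj1 (proj2 Iw)).
  move=> t' s it'.
  have nv' := nox_sub s nv.
  have c' := cons_sub s c.
  have [i0 i1] := proj1 (AI _ nv') it'.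
  have [tu' su' Iu'] := exists_prime c' i0.
  have [tw' sw' Iw'] := exists_prime c' i1.
  have s'' : tu' `|` tw' `<=` t' by rewrite fsubUset su' sw'.
  have s3 := fsubset_trans s'' s.
  case: (classic (tu' `|` tw' = t)) => [E3|ne].
    apply/eqP; rewrite eqEfsubset s /=; by rewrite -E3.
  exfalso; apply: (mx (tu' `|` tw')).
  + exists tu', tw'; do 3 split=> //; exact: cons_sub s3 c.
  + exact: ne.
  + move=> a Ha l ll; apply: Ha; exact: (fsubsetP s3).
Qed.

Lemma eval_ext : forall c a a', (forall v, v \in vars c -> a v = a' v) -> eval a c = eval a' c.
Proof.
fix IH 1. case=> [| | l | y u w | cs] a a' H /=.
- done.
- done.
- by rewrite /sat_lit H // inE.
- rewrite (H y) ?inE ?eqxx // (IH u a a') ?(IH w a a') // => v hv; apply: H;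
  by rewrite inE mem_cat hv ?orbT.
- move: H; elim: cs => [//|c cs IHc] H /=.
  rewrite (IH c a a') ?IHc // => v hv; apply: H; by rewrite /= mem_cat hv ?orbT.
Qed.

Lemma indep_eval x c : x \notin vars c -> indep x (fun a => eval a c).
Proof.
move=> nx a b; apply: eval_ext => v hv; rewrite /upd.
case: (eqVneq v x) => // E; by rewrite -E hv in nx.
Qed.

Theorem proposition9 (x : nat) (u w : circuit) (S : term -> Prop) :
  decDNNF (Dec x u w) ->
  subset_of S (IP (Dec x u w)) ->
  subset_of (S_child x false u S) (IP u) /\
  subset_of (S_child x true w S) (IP w) /\
  (same_set S (IP (Dec x u w)) <->
     same_set (S_child x false u S) (IP u) /\
     same_set (S_child x true w S) (IP w) /\
     same_set (S_nox x S)
              (maxent (conj_set (S_child x false u S) (S_child x true w S)))).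
Proof.
move=> D HS.
have [nxu nxw] : x \notin vars u /\ x \notin vars w by inversion D.
have H0 := indep_eval nxu; have H1 := indep_eval nxw.
pose F := fun a => eval a (Dec x u w).
have HF0 : forall a, a x = false -> F a = eval a u by move=> a E; rewrite /F /= E.
have HF1 : forall a, a x = true -> F a = eval a w by move=> a E; rewrite /F /= E.
have HF0' : forall a, a x = ~~ true -> F a = eval a u by move=> a E; rewrite /F /= E.
have HF1' : forall a, a x = ~~ false -> F a = eval a w by move=> a E; rewrite /F /= E.
have HS' : forall t, S t -> IPf F t := HS.
have P1 : subset_of (S_child x false u S) (IP u).
  move=> t [[nv hS]|[hS hI]] //; exact: (C1 HF0 H0 nv (HS' _ hS)).
have P2 : subset_of (S_child x true w S) (IP w).
  move=> t [[nv hS]|[hS hI]] //; exact: (C1 HF1 H1 nv (HS' _ hS)).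
split=> //; split=> //; split.
- move=> HE.
  have su : same_set (S_child x false u S) (IP u).
    move=> t; split; first exact: P1.
    move=> Iu; case: (C2 HF0 HF1' H0 H1 Iu) => I.
    + left; split; first exact: (IPf_nox H0 Iu). exact: (proj2 (HE _) I).
    + right; split=> //; exact: (proj2 (HE _) I).
  have sw : same_set (S_child x true w S) (IP w).
    move=> t; split; first exact: P2.
    move=> Iw; case: (C2 HF1 HF0' H1 H0 Iw) => I.
    + left; split; first exact: (IPf_nox H1 Iw). exact: (proj2 (HE _) I).
    + right; split=> //; exact: (proj2 (HE _) I).
  split=> //; split=> // t.
  have cc := conj_cong su sw t.
  have ne := nox_equiv t HF0 HF1 H0 H1.
  split.
  + move=> [hS nv]; apply/cc; apply/ne; split=> //; exact: HS' hS.
  + move=> hm; have [Ip nv] := proj2 ne (proj1 cc hm); split=> //; exact: (proj2 (HE _) Ip).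
- move=> [su [sw sn]] t; split; first exact: HS.
  move=> Ip.
  case: (classic (var_in x t)) => [[h|h]|nv].
  + have [nv [E [Ig nI]]] := C3 HF1 HF0' H1 H0 Ip h.
    case: (proj2 (sw _) Ig) => [[_ hS]|[hS _]]; first by rewrite E.
    by case: nI; exact: HS' hS.
  + have [nv [E [Ig nI]]] := C3 HF0 HF1' H0 H1 Ip h.
    case: (proj2 (su _) Ig) => [[_ hS]|[hS _]]; first by rewrite E.
    by case: nI; exact: HS' hS.
  + have cc := conj_cong su sw t.
    have ne := nox_equiv t HF0 HF1 H0 H1.
    exact: (proj1 (proj2 (sn t) (proj2 cc (proj1 ne (conj Ip nv))))).
Qed.
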